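(* Let $R\subset\mathbb{R}^N$ be a finite reduced root system with positive roots $R_+$ and multiplicity function $\kappa$, with Dunkl operators $\mathcal{D}_i$ as in the context. For $a,b\in\mathbb{R}^N$ set $J_{a,b}=\langle a,x\rangle\langle b,\nabla_\kappa\rangle-\langle b,x\rangle\langle a,\nabla_\kappa\rangle$ and $\mathcal{J}=\sum_{1\le i<j\le N}J_{\varepsilon_i,\varepsilon_j}^2$, where $\varepsilon_i$ are the standard unit vectors. Then, as operators on polynomials, \[ \mathcal{J}=|x|^2\Delta_\kappa-\langle x,\nabla_\kappa\rangle^2-(N-2)\langle x,\nabla_\kappa\rangle-2\sum_{v\in R_+}\kappa_v\sigma_v\langle x,\nabla_\kappa\rangle . \]
   Context: Vectors in $\mathbb{R}^N$ are row vectors, $\langle x,y\rangle=\sum x_iy_i$, $|x|^2=\langle x,x\rangle$. For $v\neq0$, $x\sigma_v=x-2\frac{\langle x,v\rangle}{|v|^2}v$. A finite reduced root system is a finite set $R$ of nonzero vectors with $u\sigma_v\in R$ for $u,v\in R$ and such that $u,cu\in R$ implies $c=\pm1$; $W(R)$ is the group generated by the $\sigma_v$; $R_+=\{v\in R:\langle u_0,v\rangle>0\}$ for a fixed $u_0$ with $\langle u_0,v\rangle\ne0$ for all $v\in R$. A multiplicity function $v\mapsto\kappa_v$ is constant on $W(R)$-orbits (values real or formal parameters). Dunkl operators: $\mathcal{D}_if(x)=\partial_if(x)+\sum_{v\in R_+}\kappa_v\frac{f(x)-f(x\sigma_v)}{\langle x,v\rangle}v_i$; $\langle a,\nabla_\kappa\rangle=\sum_ia_i\mathcal{D}_i$;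 $\langle x,\nabla_\kappa\rangle=\sum_ix_i\mathcal{D}_i$; $\Delta_\kappa=\sum_i\mathcal{D}_i^2$. The operator $\sigma_v$ acts by $(\sigma_vf)(x)=f(x\sigma_v)$; $\langle a,x\rangle$ and $|x|^2$ act by multiplication. *)

(* Defs.v *)
From HB Require Import structures.
From mathcomp Require Import all_boot all_order all_algebra.
From mathcomp Require Import mpoly.
From Stdlib Require Import ClassicalEpsilon.

Set Implicit Arguments.
Unset Strict Implicit.
Unset Printing Implicit Defensive.

Import Order.TTheory GRing.Theory Num.Theory.
Local Open Scope ring_scope.

Section Dunkl.
Variables (R : realFieldType) (N : nat).

Definition dotv (x y : 'rV[R]_N) : R := \sum_(i < N) x 0 i * y 0 i.

Definition refl (v x : 'rV[R]_N) : 'rV[R]_N :=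
  x - (2 * dotv x v / dotv v v) *: v.

Definition root_system (Rs : seq 'rV[R]_N) : Prop :=
  [/\ uniq Rs,
      (forall v, v \in Rs -> v != 0),
      (forall u v, u \in Rs -> v \in Rs -> refl v u \in Rs) &
      (forall u (c : R), u \in Rs -> c *: u \in Rs -> c = 1 \/ c = -1)].

Definition regular_vec (Rs : seq 'rV[R]_N) (u0 : 'rV[R]_N) : Prop :=
  forall v, v \in Rs -> dotv u0 v != 0.

Definition pos_roots (Rs : seq 'rV[R]_N) (u0 : 'rV[R]_N) : seq 'rV[R]_N :=
  [seq v <- Rs | 0 < dotv u0 v].

(* multiplicity function: constant on W(R)-orbits, W(R) generated by the
   reflections sigma_v, v in R *)
Definition multiplicity (Rs : seq 'rV[R]_N) (kappa : 'rV[R]_N -> R) : Prop :=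
  forall u (s : seq 'rV[R]_N), u \in Rs -> all (mem Rs) s ->
    kappa (foldl (fun x v => refl v x) u s) = kappa u.

Definition Pol := {mpoly R[N]}.

Definition linP (a : 'rV[R]_N) : Pol := \sum_(i < N) a 0 i *: 'X_i.

Definition normsqP : Pol := \sum_(i < N) 'X_i ^+ 2.

(* (sigma_v f)(x) = f(x sigma_v) : substitute x_j := (x sigma_v)_j *)
Definition sigmaP (v : 'rV[R]_N) (f : Pol) : Pol :=
  comp_mpoly [tuple ('X_j - (2 / dotv v v * v 0 j) *: linP v) | j < N] f.

(* the divided difference (f(x) - f(x sigma_v)) / <x, v>, i.e. the
   (unique) polynomial q with f - sigma_v f = <x,v> * q *)
Definition ddiff (v : 'rV[R]_N) (f : Pol) : Pol :=
  epsilon (inhabits (0 : Pol)) (fun q : Pol => f - sigmaP v f = linP v * q).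

Variables (Rs : seq 'rV[R]_N) (u0 : 'rV[R]_N) (kappa : 'rV[R]_N -> R).

Definition Dunkl (i : 'I_N) (f : Pol) : Pol :=
  mderiv i f + \sum_(v <- pos_roots Rs u0) (kappa v * v 0 i) *: ddiff v f.

Definition dirD (a : 'rV[R]_N) (f : Pol) : Pol :=
  \sum_(i < N) a 0 i *: Dunkl i f.

Definition xnabla (f : Pol) : Pol := \sum_(i < N) 'X_i * Dunkl i f.

Definition DLap (f : Pol) : Pol := \sum_(i < N) Dunkl i (Dunkl i f).

Definition Jop (a b : 'rV[R]_N) (f : Pol) : Pol :=
  linP a * dirD b f - linP b * dirD a f.

Definition epsv (i : 'I_N) : 'rV[R]_N := delta_mx 0 i.

Definition calJ (f : Pol) : Pol :=
  \sum_(i < N) \sum_(j < N | (i < j)%N)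
     Jop (epsv i) (epsv j) (Jop (epsv i) (epsv j) f).

End Dunkl.

(* Main.v *)
Require Import Defs.
From HB Require Import structures.
From mathcomp Require Import all_boot all_order all_algebra.
From mathcomp Require Import mpoly.
From mathcomp Require Import ring.
From Stdlib Require Import ClassicalEpsilon.

Import Order.TTheory GRing.Theory Num.Theory.
Local Open Scope ring_scope.

Section Basic.
Variables (R : realFieldType) (N : nat).
Local Notation P := {mpoly R[N]}.

Lemma sum_delta (F : 'I_N -> P) i : \sum_(j < N) (i == j)%:R *: F j = F i.
Proof.
rewrite (bigD1 i) //= eqxx scale1r big1 ?addr0 // => j /negbTE.
by rewrite eq_sym => ->; rewrite scale0r.
Qed.

Lemma mderivXU i j : mderiv j ('X_i : P) = (i == j)%:R.
Proof.
rewrite mderivX mnm1E; case: eqP => [->|ne].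
  by rewrite -[X in (X - _)%MM]add0m addmK mpolyX0 scale1r.
by rewrite scale0r.
Qed.

Lemma epsv_E (i k : 'I_N) : (epsv R i) 0 k = (i == k)%:R.
Proof. by rewrite /epsv mxE eqxx /= eq_sym. Qed.

Lemma linP_eps (i : 'I_N) : linP (epsv R i) = 'X_i.
Proof.
rewrite /linP (eq_bigr (fun k => (i == k)%:R *: ('X_k : P))) ?sum_delta //.
by move=> k _; rewrite epsv_E.
Qed.

Variable v : 'rV[R]_N.
Hypothesis hv : dotv v v != 0.
Let c := 2 / dotv v v.
Let L : P := linP v.
Let s := sigmaP v.

Lemma sigmaX i : s 'X_i = 'X_i - (c * v 0 i) *: L.
Proof. by rewrite /s /sigmaP comp_mpolyXU -tnth_nth tnth_mktuple. Qed.

Lemma sigmaM f g : s (f * g) = s f * s g.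
Proof. by rewrite /s /sigmaP rmorphM. Qed.
Lemma sigmaD f g : s (f + g) = s f + s g.
Proof. by rewrite /s /sigmaP raddfD. Qed.
Lemma sigmaB f g : s (f - g) = s f - s g.
Proof. by rewrite /s /sigmaP raddfB. Qed.
Lemma sigmaZ a f : s (a *: f) = a *: s f.
Proof. by rewrite /s /sigmaP comp_mpolyZ. Qed.
Lemma sigma1 : s 1 = 1.
Proof. by rewrite /s /sigmaP rmorph1. Qed.
Lemma sigma_sum I (r : seq I) (Pr : pred I) F :
  s (\sum_(k <- r | Pr k) F k) = \sum_(k <- r | Pr k) s (F k).
Proof. by rewrite /s /sigmaP raddf_sum. Qed.

Lemma sigmaL : s L = - L.
Proof.
rewrite {1}/L /linP sigma_sum.
rewrite (eq_bigr (fun i => v 0 i *: 'X_i - (c * v 0 i * v 0 i) *: L)); last first.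
  by move=> i _; rewrite sigmaZ sigmaX scalerBr scalerA [v 0 i * _]mulrC.
rewrite sumrB -/(linP v) -/L -scaler_suml.
have -> : \sum_(i < N) c * v 0 i * v 0 i = 2.
  rewrite -(divfK hv 2) -/c /dotv mulr_sumr; apply: eq_bigr => i _; by rewrite mulrA.
by rewrite scaler_nat mulr2n opprD addrA subrr add0r.
Qed.

Definition dvL (g : P) := exists q, g - s g = L * q.

Lemma dvL_all g : dvL g.
Proof.
have dM a b : dvL a -> dvL b -> dvL (a * b).
  move=> [q1 h1] [q2 h2]; exists (q1 * b + s a * q2).
  rewrite sigmaM mulrDr mulrA -h1 mulrCA -h2; ring.
have dX i k : dvL ('X_i ^+ k).
  elim: k => [|k IH]; first by exists 0; rewrite expr0 sigma1 subrr mulr0.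
  rewrite exprS; apply: dM => //; exists (c * v 0 i)%:MP; rewrite mulrC.
  by rewrite sigmaX opprB addrC subrK mul_mpolyC.
elim/mpolyind: g => [|a m p _ _ [q hq]]; first by exists 0; rewrite /s /sigmaP raddf0 subrr mulr0.
have [q' hq'] : dvL 'X_[m].
  rewrite mpolyXE_id; apply: (big_ind dvL) => //.
  by exists 0; rewrite sigma1 subrr mulr0.
exists (a *: q' + q); rewrite sigmaD sigmaZ mulrDr -hq -scalerAr -hq'.
by rewrite scalerBr opprD addrACA.
Qed.


Lemma mderivL k : mderiv k L = (v 0 k)%:MP.
Proof.
rewrite /L /linP raddf_sum /=.
rewrite (eq_bigr (fun i => (k == i)%:R *: (v 0 i)%:MP)).
  by rewrite sum_delta.
move=> i _; rewrite mderivZ mderivXU eq_sym -alg_mpolyC.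
by rewrite !scaler_nat scalerMnr.
Qed.

Lemma L_neq0 : L != 0.
Proof.
apply/eqP=> L0; move/eqP: hv; apply.
rewrite /dotv big1 // => k _.
have : (v 0 k)%:MP = 0 :> P by rewrite -mderivL L0 mderiv0.
by move/eqP; rewrite mpolyC_eq0 => /eqP ->; rewrite mulr0.
Qed.

Lemma ddiff_spec f : f - s f = L * ddiff v f.
Proof. rewrite /ddiff; apply: (epsilon_spec (inhabits (0:P)) (fun q : P => f - sigmaP v f = linP v * q)); case: (dvL_all f) => q hq; by exists q. Qed.

Lemma ddiff_uniq f q : f - s f = L * q -> ddiff v f = q.
Proof. by move=> h; apply: (mulfI L_neq0); rewrite -ddiff_spec. Qed.

Lemma ddiffD f g : ddiff v (f + g) = ddiff v f + ddiff v g.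
Proof.
apply: ddiff_uniq; rewrite sigmaD mulrDr -!ddiff_spec; ring.
Qed.

Lemma ddiffZ a f : ddiff v (a *: f) = a *: ddiff v f.
Proof.
apply: ddiff_uniq; rewrite sigmaZ -scalerAr -ddiff_spec scalerBr //.
Qed.

Lemma ddiff0 : ddiff v 0 = 0.
Proof. by apply: ddiff_uniq; rewrite /s /sigmaP raddf0 subrr mulr0. Qed.

Lemma ddiffXM i g : ddiff v ('X_i * g) = 'X_i * ddiff v g + (c * v 0 i) *: s g.
Proof.
apply: ddiff_uniq; rewrite sigmaM sigmaX -!mul_mpolyC mulrDr mulrCA -ddiff_spec.
ring.
Qed.

End Basic.
Opaque ddiff.
Section Dk.
Variables (R : realFieldType) (N : nat) (Rs : seq 'rV[R]_N)
  (u0 : 'rV[R]_N) (kappa : 'rV[R]_N -> R).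
Hypothesis hPR : forall v, v \in pos_roots Rs u0 -> dotv v v != 0.
Local Notation P := {mpoly R[N]}.
Local Notation D := (Dunkl Rs u0 kappa).
Local Notation PR := (pos_roots Rs u0).
Local Notation E := (xnabla Rs u0 kappa).
Definition cc (v : 'rV[R]_N) := 2 / dotv v v.

Lemma DD i f g : D i (f + g) = D i f + D i g.
Proof.
rewrite /Dunkl mderivD -addrACA; congr (_ + _); rewrite -big_split /=.
by apply: eq_big_seq => v hv; rewrite ddiffD ?hPR // scalerDr.
Qed.

Lemma DZ i a f : D i (a *: f) = a *: D i f.
Proof.
rewrite /Dunkl mderivZ scalerDr; congr (_ + _).
rewrite scaler_sumr; by apply: eq_big_seq => v hv; rewrite ddiffZ ?hPR // !scalerA mulrC.
Qed.

Lemma D0 i : D i 0 = 0.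
Proof. by have := DZ i 0 0; rewrite !scale0r. Qed.

Lemma Dsum i I (r : seq I) (Pr : pred I) F :
  D i (\sum_(k <- r | Pr k) F k) = \sum_(k <- r | Pr k) D i (F k).
Proof. exact: (big_morph _ (DD i) (D0 i)). Qed.

Lemma DXM i j g : D j ('X_i * g) = 'X_i * D j g + (i == j)%:R *: g
  + \sum_(v <- PR) (kappa v * v 0 j * (cc v * v 0 i)) *: sigmaP v g.
Proof.
rewrite /Dunkl mderivM mderivXU mulr_natl -scaler_nat mulrDr mulr_sumr.
have E1 : \sum_(v <- PR) (kappa v * v 0 j) *: ddiff v ('X_i * g) =
  \sum_(v <- PR) ('X_i * ((kappa v * v 0 j) *: ddiff v g)
   + (kappa v * v 0 j * (cc v * v 0 i)) *: sigmaP v g).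
  apply: eq_big_seq => v hv.
  rewrite ddiffXM ?hPR //.
  rewrite scalerDr.
  rewrite -scalerAr.
  by rewrite scalerA.
rewrite [in LHS]E1.
rewrite big_split /= -!addrA addrCA; congr (_ + _); by rewrite mulr_sumr addrCA.
Qed.


Definition Qv v f := \sum_(i < N) \sum_(j < N)
  (cc v * v 0 i * v 0 j) *: ('X_i * sigmaP v (D j f)).
Definition Q f := \sum_(v <- PR) kappa v *: Qv v f.
Definition T1 f := \sum_(i < N) \sum_(j < N) 'X_i * ('X_j * D j (D i f)).

Lemma swap3 (V : nmodType) (F : 'I_N -> 'I_N -> 'rV[R]_N -> V) :
  \sum_(i < N) \sum_(j < N) \sum_(v <- PR) F i j v
  = \sum_(v <- PR) \sum_(i < N) \sum_(j < N) F i j v.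
Proof.
under eq_bigr => i _ do rewrite exchange_big.
by rewrite exchange_big.
Qed.

Lemma congr3D (V : nmodType) (a b c a' b' c' : V) :
  a = a' -> b = b' -> c = c' -> a + b + c = a' + b' + c'.
Proof. by move=> -> -> ->. Qed.

Lemma sum2D (V : nmodType) (F G : 'I_N -> 'I_N -> V) :
  \sum_(i < N) \sum_(j < N) (F i j + G i j)
  = \sum_(i < N) \sum_(j < N) F i j + \sum_(i < N) \sum_(j < N) G i j.
Proof. by rewrite -big_split; apply: eq_bigr => i _; rewrite big_split. Qed.

Lemma XDXM i j k g : 'X_k * D j ('X_i * g) = 'X_k * ('X_i * D j g)
  + 'X_k * ((i == j)%:R *: g)
  + 'X_k * \sum_(v <- PR) (kappa v * v 0 j * (cc v * v 0 i)) *: sigmaP v g.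
Proof. by rewrite DXM -!mulrDr. Qed.

Lemma A_eq f : \sum_(i < N) \sum_(j < N) 'X_i * D j ('X_i * D j f)
  = normsqP R N * DLap Rs u0 kappa f + E f + Q f.
Proof.
under eq_bigr => i _ do under eq_bigr => j _ do rewrite XDXM.
rewrite [LHS]sum2D [in LHS]sum2D; apply: congr3D.
- rewrite /normsqP /DLap mulr_suml; apply: eq_bigr => i _.
  by rewrite mulr_sumr; apply: eq_bigr => j _; rewrite mulrA expr2.
- by apply: eq_bigr => i _; rewrite -mulr_sumr sum_delta.
- under eq_bigr => i _ do under eq_bigr => j _ do rewrite mulr_sumr.
  rewrite swap3 /Q; apply: eq_bigr => v _; rewrite /Qv scaler_sumr.
  apply: eq_bigr => i _; rewrite scaler_sumr; apply: eq_bigr => j _.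
  rewrite -scalerAr scalerA; congr (_ *: _); ring.
Qed.


Lemma B_eq f : \sum_(i < N) \sum_(j < N) 'X_i * D j ('X_j * D i f)
  = T1 f + N%:R *: E f
    + \sum_(v <- PR) (kappa v * 2) *: \sum_(i < N) 'X_i * sigmaP v (D i f).
Proof.
under eq_bigr => i _ do under eq_bigr => j _ do rewrite XDXM.
rewrite [LHS]sum2D [in LHS]sum2D; apply: congr3D.
- by [].
- rewrite /xnabla scaler_sumr; apply: eq_bigr => i _.
  under eq_bigr => j _ do rewrite eqxx scale1r.
  by rewrite sumr_const card_ord scaler_nat.
- under eq_bigr => i _ do under eq_bigr => j _ do rewrite mulr_sumr.
  rewrite swap3; apply: eq_big_seq => v hv; rewrite scaler_sumr.
  apply: eq_bigr => i _.
  under eq_bigr => j _ do rewrite -scalerAr.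
  rewrite -scaler_suml; congr (_ *: _).
  have -> : \sum_(j < N) kappa v * v 0 j * (cc v * v 0 j)
      = kappa v * cc v * dotv v v.
    by rewrite /dotv mulr_sumr; apply: eq_bigr => j _; ring.
  by rewrite -mulrA /cc divfK ?hPR.
Qed.

Lemma EE f : E (E f) = T1 f + E f + Q f.
Proof.
rewrite {1}/xnabla.
under eq_bigr => j _ do rewrite Dsum mulr_sumr.
under eq_bigr => j _ do under eq_bigr => i _ do rewrite XDXM.
rewrite [LHS]sum2D [in LHS]sum2D; apply: congr3D.
- rewrite exchange_big /T1; apply: eq_bigr => i _; apply: eq_bigr => j _.
  by rewrite mulrCA.
- apply: eq_bigr => j _; rewrite -mulr_sumr.
  by under eq_bigr => i _ do rewrite eq_sym; rewrite sum_delta.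
- under eq_bigr => i _ do under eq_bigr => j _ do rewrite mulr_sumr.
  rewrite swap3 /Q; apply: eq_bigr => v _; rewrite /Qv scaler_sumr.
  apply: eq_bigr => i _; rewrite scaler_sumr; apply: eq_bigr => j _.
  rewrite -scalerAr scalerA; congr (_ *: _); ring.
Qed.

Lemma Sig v f : v \in PR ->
  \sum_(i < N) 'X_i * sigmaP v (D i f) = sigmaP v (E f) + Qv v f.
Proof.
move=> hv.
have h1 : sigmaP v (E f) = \sum_(i < N) 'X_i * sigmaP v (D i f)
    - \sum_(i < N) ((cc v * v 0 i) *: linP v) * sigmaP v (D i f).
  rewrite /xnabla sigma_sum -sumrB; apply: eq_bigr => i _.
  by rewrite sigmaM sigmaX mulrBl.
have h2 : \sum_(i < N) ((cc v * v 0 i) *: linP v) * sigmaP v (D i f) = Qv v f.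
  rewrite /Qv [RHS]exchange_big; apply: eq_bigr => j _.
  rewrite /linP -scalerAl mulr_suml scaler_sumr; apply: eq_bigr => i _.
  rewrite -scalerAl scalerA; congr (_ *: _); ring.
by rewrite h1 h2 subrK.
Qed.


Lemma DB i f g : D i (f - g) = D i f - D i g.
Proof. by rewrite DD -scaleN1r DZ scaleN1r. Qed.

Lemma dirD_eps k g : dirD Rs u0 kappa (epsv R k) g = D k g.
Proof.
rewrite /dirD (eq_bigr (fun l => (k == l)%:R *: D l g)) ?sum_delta //.
by move=> l _; rewrite epsv_E.
Qed.

Lemma Jop_eps i j g : Jop Rs u0 kappa (epsv R i) (epsv R j) g
  = 'X_i * D j g - 'X_j * D i g.
Proof. by rewrite /Jop !linP_eps !dirD_eps. Qed.

Definition GJ i j f :=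
  Jop Rs u0 kappa (epsv R i) (epsv R j) (Jop Rs u0 kappa (epsv R i) (epsv R j) f).
Definition aa i j f : P := 'X_i * D j ('X_i * D j f).
Definition bb i j f : P := 'X_i * D j ('X_j * D i f).

Lemma JJ i j f : GJ i j f = (aa i j f - bb i j f) + (aa j i f - bb j i f).
Proof. by rewrite /GJ !Jop_eps !DB !mulrBr opprB. Qed.

Opaque Dunkl sigmaP xnabla DLap normsqP.
Lemma alg_id (V : comRingType) (Lap e ee q S T : V) (n : nat) :
  T = ee - e - q ->
  Lap + e + q - (T + e *+ n + (S *+ 2 + q *+ 2))
  = Lap - ee - (e *+ n - e *+ 2) - S *+ 2.
Proof. move=> ->; ring. Qed.

Lemma AB_final f :
  \sum_(i < N) \sum_(j < N) aa i j f - \sum_(i < N) \sum_(j < N) bb i j f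
  = normsqP R N * DLap Rs u0 kappa f - E (E f) - (N%:R - 2) *: E f
    - 2 *: \sum_(v <- PR) kappa v *: sigmaP v (E f).
Proof.
have hA : \sum_(i < N) \sum_(j < N) aa i j f
  = normsqP R N * DLap Rs u0 kappa f + E f + Q f := A_eq f.
have hB : \sum_(i < N) \sum_(j < N) bb i j f = T1 f + N%:R *: E f
    + \sum_(v <- PR) (kappa v * 2) *: \sum_(i < N) 'X_i * sigmaP v (D i f) := B_eq f.
apply: etrans (congr2 (fun a b => a - b) hA hB) _.
have hT : T1 f = E (E f) - E f - Q f.
  rewrite EE; move: (T1 f) (E f) (Q f) => a b c; ring.
have hS : \sum_(v <- PR) (kappa v * 2) *: \sum_(i < N) 'X_i * sigmaP v (D i f)
  = 2 *: \sum_(v <- PR) kappa v *: sigmaP v (E f) + 2 *: Q f.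
  rewrite /Q [in RHS]scaler_sumr [in RHS]scaler_sumr -big_split /=.
  apply: eq_big_seq => v hv; rewrite Sig // scalerDr !scalerA [kappa v * 2]mulrC.
  by [].
rewrite hS scalerBl !scaler_nat.
exact: alg_id.
Qed.

Opaque aa bb.

Lemma calJ2 f : calJ Rs u0 kappa f *+ 2 =
  (\sum_(i < N) \sum_(j < N) aa i j f - \sum_(i < N) \sum_(j < N) bb i j f) *+ 2.
Proof.
have Gsym i j : GJ j i f = GJ i j f by rewrite !JJ; exact: addrC.
have Gdiag i : GJ i i f = 0 by rewrite JJ subrr addr0.
have e1 : \sum_(i < N) \sum_(j < N | (j < i)%N) GJ i j f
    = \sum_(i < N) \sum_(j < N) (if (j < i)%N then GJ i j f else 0).
  by apply: eq_bigr => i _; rewrite big_mkcond.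
have e2 : \sum_(i < N) \sum_(j < N | (i < j)%N) GJ i j f
    = \sum_(i < N) \sum_(j < N) (if (i < j)%N then GJ i j f else 0).
  by apply: eq_bigr => i _; rewrite big_mkcond.
have sw : \sum_(i < N) \sum_(j < N | (j < i)%N) GJ i j f
    = \sum_(i < N) \sum_(j < N | (i < j)%N) GJ i j f.
  rewrite e1 e2 [LHS]exchange_big; apply: eq_bigr => i _; apply: eq_bigr => j _.
  by rewrite (Gsym j i).
have sp : \sum_(i < N) \sum_(j < N) GJ i j f
    = \sum_(i < N) \sum_(j < N | (i < j)%N) GJ i j f
      + \sum_(i < N) \sum_(j < N | (j < i)%N) GJ i j f.
  rewrite e1 e2 -sum2D; apply: eq_bigr => i _; apply: eq_bigr => j _.
  case: (ltngtP i j) => h; rewrite ?addr0 ?add0r //.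
  by have -> : i = j by apply: val_inj.
have -> : calJ Rs u0 kappa f = \sum_(i < N) \sum_(j < N | (i < j)%N) GJ i j f by [].
rewrite mulr2n -{2}sw -sp.
under eq_bigr => i _ do under eq_bigr => j _ do rewrite JJ.
rewrite sum2D [X in _ + X]exchange_big /= -mulr2n.
have hab : \sum_(i < N) \sum_(j < N) (aa i j f - bb i j f)
   = \sum_(i < N) \sum_(j < N) aa i j f - \sum_(i < N) \sum_(j < N) bb i j f.
  by rewrite -sumrB; apply: eq_bigr => i _; rewrite sumrB.
by rewrite hab.
Qed.

Lemma main_sec f : calJ Rs u0 kappa f =
    normsqP R N * DLap Rs u0 kappa f
    - E (E f)
    - (N%:R - 2) *: E f
    - 2 *: \sum_(v <- PR) kappa v *: sigmaP v (E f).
Proof.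
have h2 : (2 : R) != 0 by rewrite pnatr_eq0.
apply: (scalerI h2); rewrite [LHS]scaler_nat [RHS]scaler_nat calJ2.
by rewrite AB_final.
Qed.

End Dk.

Theorem mainTheorem12 (R : realFieldType) (N : nat) (Rs : seq 'rV[R]_N)
  (u0 : 'rV[R]_N) (kappa : 'rV[R]_N -> R)
  (hR : root_system Rs) (hu0 : regular_vec Rs u0)
  (hk : multiplicity Rs kappa) (f : {mpoly R[N]}) :
  calJ Rs u0 kappa f =
    normsqP R N * DLap Rs u0 kappa f
    - xnabla Rs u0 kappa (xnabla Rs u0 kappa f)
    - (N%:R - 2) *: xnabla Rs u0 kappa f
    - 2 *: \sum_(v <- pos_roots Rs u0)
             kappa v *: sigmaP v (xnabla Rs u0 kappa f).
Proof.
have hPR : forall v, v \in pos_roots Rs u0 -> dotv v v != 0.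
  move=> v; rewrite mem_filter => /andP [hpos _]; apply/eqP => h0.
  have hk0 : forall k : 'I_N, v 0 k * v 0 k = 0.
    move=> k; apply: (psumr_eq0P _ h0) => // l _.
    by rewrite -expr2 sqr_ge0.
  move: hpos; rewrite /dotv big1 ?ltxx // => k _.
  by have /eqP := hk0 k; rewrite mulf_eq0 orbb => /eqP ->; rewrite mulr0.
exact: (@main_sec R N Rs u0 kappa hPR f).
Qed.
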